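(* Let $C>1$, $P$ a probability measure on $[0,\infty)$, and $\alpha>0$ such that $\alpha\,\mu_{P,C}\le\mathbb{E}_{t\sim P}\big[t\,\mathbf 1[t<m_P]\big]$. Then $G_{P,C}\big(\tfrac1Cm_P\big)\ge\alpha\,\mu_{P,C}$.
   Context: For $\mu\ge0$ define $G_{P,C}(\mu):=\mathbb{E}_{t\sim P}[\min\{t,C\mu\}]-\mu$. The $C$-clipped mean $\mu_{P,C}$ is the largest $\mu\ge0$ with $G_{P,C}(\mu)=0$. The $\frac1C$-median is $m_P:=\sup\{M\ge0:\mathbb{P}_{t\sim P}[t\ge M]\ge\frac1C\}$. (In the paper this is applied with $P=P_x$, the law of $\|\nabla L_\gamma(x)\|_2^2$, under the assumption that such an $\alpha=\alpha_C$ works uniformly for all $x\ne0$.) *)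

(* Defs.v *)
From HB Require Import structures.
From mathcomp Require Import all_boot all_order all_algebra.
From mathcomp Require Import all_classical all_reals all_analysis.
Set Implicit Arguments. Unset Strict Implicit. Unset Printing Implicit Defensive.
Import Order.TTheory GRing.Theory Num.Theory.
Local Open Scope classical_set_scope.
Local Open Scope ring_scope.

(* P : a probability measure on the Borel sets of R, supported on [0,oo):
   P [set t | t < 0] = 0. *)

Definition Gclip (R : realType) (P : probability R R) (C mu : R) : \bar R :=
  ((\int[P]_t (Order.min t (C * mu))%:E) - mu%:E)%E.

Definition is_clipped_mean (R : realType) (P : probability R R) (C mu : R) : Prop :=
  0 <= mu /\ Gclip P C mu = 0%E /\
  (forall nu : R, 0 <= nu -> Gclip P C nu = 0%E -> nu <= mu).

Definition inv_median (R : realType) (P : probability R R) (C : R) : R :=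
  sup [set M : R | 0 <= M /\ ((C^-1)%:E <= P [set t : R | (M <= t)%R])%E].

(* Main.v *)
Require Import Defs.
From HB Require Import structures.
From mathcomp Require Import all_boot all_order all_algebra.
From mathcomp Require Import all_classical all_reals all_analysis.
From mathcomp Require Import measurable_realfun lebesgue_integral.
Import Order.TTheory GRing.Theory Num.Theory.
Local Open Scope classical_set_scope.
Local Open Scope ring_scope.

Lemma mlt (R : realType) (m : R) : measurable [set t : R | t < m].
Proof.
have -> : [set t : R | t < m] = [set` `]-oo, m[].
  by apply/seteqP; split => x /=; rewrite in_itv.
exact: measurable_itv.
Qed.

Lemma mge (R : realType) (m : R) : measurable [set t : R | m <= t].
Proof.
have -> : [set t : R | m <= t] = [set` `[m, +oo[].
  by apply/seteqP; split => x /=; rewrite in_itv /= ?andbT.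
exact: measurable_itv.
Qed.

Lemma median_prop (R : realType) (P : probability R R) (C : R) :
  let m := inv_median P C in
  (m = 0) \/ (0 <= m /\ ((C^-1)%:E <= P [set t : R | (m <= t)%R])%E).
Proof.
move=> m.
set S := [set M : R | 0 <= M /\ ((C^-1)%:E <= P [set t : R | (M <= t)%R])%E].
have [hs|hs] := pselect (has_sup S); last by left; rewrite /m /inv_median sup_out.
right.
have [M0 SM0] := (hs.1).
have m0 : 0 <= m by apply: le_trans SM0.1 _; exact: (ub_le_sup hs.2).
split => //.
pose F := fun n : nat => [set t : R | m - n.+1%:R^-1 <= t].
have mF n : measurable (F n) by exact: mge.
have capF : \bigcap_n F n = [set t : R | m <= t].
  apply/seteqP; split => x /=.
  - move=> H; rewrite leNgt; apply/negP => xm.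
    pose k := Num.truncn ((m - x)^-1).
    have hk : (m - x)^-1 < k.+1%:R by exact: truncnS_gt.
    rewrite invf_plt ?posrE ?subr_gt0 // in hk.
    have := H k I; rewrite /F /= lerBlDr -lerBlDl.
    by rewrite leNgt hk.
  - move=> mx n _; apply: le_trans mx; rewrite /F /= lerBlDr lerDl; done.
have FC n : ((C^-1)%:E <= P (F n))%E.
  have ep : 0 < n.+1%:R^-1 :> R by rewrite invr_gt0.
  have [M SM hM] := sup_adherent ep hs.
  apply: (le_trans SM.2); apply: le_measure; rewrite ?inE; try exact: mge.
  by move=> t /= Mt; apply: le_trans Mt; apply: ltW.
have cv : (P \o F) @ \oo --> P (\bigcap_n F n).
  apply: nonincreasing_cvg_mu => //.
  - by rewrite (le_lt_trans (probability_le1 _ _)) ?ltry //.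
  - by rewrite capF; exact: mge.
  - move=> a b ab; apply/subsetPset => t /=; apply: le_trans.
    rewrite lerD2l lerN2 lef_pV2 ?posrE // ler_nat; done.
rewrite -capF -(cvg_lim _ cv) //.
apply: lime_ge; first by apply/cvg_ex; eexists; exact: cv.
by apply: nearW => n; exact: FC.
Qed.

Theorem mainTheorem17 (R : realType) (P : probability R R) (C alpha mu : R) :
  1 < C ->
  P [set t : R | (t < 0)%R] = 0%E ->
  0 < alpha ->
  is_clipped_mean P C mu ->
  ((alpha * mu)%:E <=
     \int[P]_(t in [set t : R | (t < inv_median P C)%R]) t%:E)%E ->
  ((alpha * mu)%:E <= Gclip P C (C^-1 * inv_median P C))%E.
Proof.
move=> C1 _ _ _ H.
have hmp := @median_prop _ P C.
move: H hmp; set m := inv_median P C => H hmp.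
have C0 : C != 0 by rewrite gt_eqF // (lt_trans ltr01).
rewrite /Gclip mulrA mulfV // mul1r.
pose A := [set t : R | t < m]. pose B := [set t : R | m <= t].
have mmin : measurable_fun setT ((fun t : R => (Order.min t m)%R%:E) : R -> \bar R).
  apply/measurable_EFinP; apply: measurable_minr => //.
have -> : (\int[P]_t (Order.min t m)%R%:E = \int[P]_(t in A `|` B) (Order.min t m)%R%:E)%E.
  congr integral; apply/seteqP; split => x //= _; rewrite /setU /=.
  by case: (ltP x m); [left|right].
rewrite integral_setU //; last 4 first.
- exact: mlt.
- exact: mge.
- exact: measurable_funS mmin.
- rewrite disj_set2E; apply/eqP; apply/seteqP; split => x // [] /= h1 h2.
  move: h1 h2; rewrite /A /B /= => h1 h2. by move: h1; rewrite ltNge h2.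
have -> : (\int[P]_(x in A) (Order.min x m)%R%:E = \int[P]_(x in A) x%:E)%E.
  apply: eq_integral => x; rewrite inE /= => xm; by rewrite min_l //; exact: ltW.
have EB : (\int[P]_(x in B) (Order.min x m)%R%:E = m%:E * P B)%E.
  rewrite -integral_cst; last exact: mge.
  by apply: eq_integral => y; rewrite inE /= => ym; rewrite /= min_r.
rewrite EB.
rewrite -addeA; apply: (le_trans H); apply: leeDl.
case: hmp => [m0|[m0 hC]].
  by rewrite m0 mul0e mulr0 sube0.
rewrite sube_ge0 ?fin_numE //= mulrC EFinM.
by apply: lee_pmul => //; rewrite lee_fin invr_ge0 ltW // (lt_trans ltr01).
Qed.
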